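(* Let $U=(\mathcal{L}_1\otimes\mathcal{L}_2)\,\Omega\,(\mathcal{R}_1\otimes\mathcal{R}_2)$ be a two-qubit unitary, where $\mathcal{L}_i,\mathcal{R}_i$ are single-qubit unitaries and $$\Omega = e^{-i(\alpha_1\hat\sigma_1\otimes\hat\sigma_1+\alpha_2\hat\sigma_2\otimes\hat\sigma_2+\alpha_3\hat\sigma_3\otimes\hat\sigma_3)}$$ with $\hat\sigma_i$ the Pauli matrices. Let $c_i=\cos(4\alpha_i)$ and suppose $$\frac{3-c_1(c_2+c_3)-c_2c_3}{4}=0.$$ Then for every two-qubit density operator $\rho^{SE}$, with $\rho^S=\operatorname{Tr}_E\rho^{SE}$, there exists a single-qubit density operator $\zeta^E$ such that $\operatorname{Tr}_E(U\rho^{SE}U^\dagger)=\operatorname{Tr}_E(U(\rho^S\otimes\zeta^E)U^\dagger)$, i.e. the system dynamics can be $U$-generated by a product state.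
   Context: The quantity $\frac{3-c_1(c_2+c_3)-c_2c_3}{4}$ is the normalized entangling power of $U$. ''$U$-generated by a product state'' means existence of a valid environment state $\zeta^E$ with the displayed equality. *)

(* Defs.v *)
From HB Require Import structures.
From mathcomp Require Import all_boot all_order all_algebra.
From mathcomp Require Import all_classical all_reals all_analysis.
From mathcomp Require Import complex mxtens.
Import Order.TTheory GRing.Theory Num.Theory.
Import numFieldNormedType.Exports.

Set Implicit Arguments.
Unset Strict Implicit.
Unset Printing Implicit Defensive.

Local Open Scope ring_scope.
Local Open Scope complex_scope.
Local Open Scope classical_set_scope.

Section QDefs.
Variable R : realType.
Local Notation C := (R[i]).

Definition dag {m n : nat} (A : 'M[C]_(m, n)) : 'M[C]_(n, m) :=
  map_mx conjc A^T.

Definition unitary {n : nat} (U : 'M[C]_n) : Prop := U *m dag U = 1%:M.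

Definition density {n : nat} (rho : 'M[C]_n) : Prop :=
  [/\ dag rho = rho,
      (forall v : 'cV[C]_n, 0 <= (dag v *m rho *m v) 0 0)
    & \tr rho = 1].

Definition expm {n : nat} (A : 'M[C]_n) : 'M[C]_n :=
  \matrix_(i, j)
    (limn (fun m : nat => ((\sum_(k < m) (k`!%:R)^-1 *: A ^+ k) i j : C^o)) : C).

(* partial trace over the second (environment) tensor factor, for the
   Kronecker product convention (A *t B) (i,j) (k,l) = A i k * B j l *)
Definition ptraceE {m n : nat} (M : 'M[C]_(m * n)) : 'M[C]_m :=
  \matrix_(i, j) \sum_(k < n) M (mxtens_index (i, k)) (mxtens_index (j, k)).

Definition sigma1 : 'M[C]_2 := \matrix_(i, j) (if i == j then 0 else 1).
Definition sigma2 : 'M[C]_2 :=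
  \matrix_(i, j) (if i == j then 0 else if i == 0 then - 'i else 'i).
Definition sigma3 : 'M[C]_2 :=
  \matrix_(i, j) (if i == j then (if i == 0 then 1 else -1) else 0).

Definition Omega (a1 a2 a3 : R) : 'M[C]_(2 * 2) :=
  expm (- 'i *: (a1%:C *: (sigma1 *t sigma1) + a2%:C *: (sigma2 *t sigma2)
                 + a3%:C *: (sigma3 *t sigma3))).

End QDefs.

(* Main.v *)
Require Import Defs.
From HB Require Import structures.
From mathcomp Require Import all_boot all_order all_algebra.
From mathcomp Require Import all_classical all_reals all_analysis.
From mathcomp Require Import complex mxtens.
From mathcomp Require Import ring lra.
Import Order.TTheory GRing.Theory Num.Theory.
Import numFieldNormedType.Exports.
Local Open Scope ring_scope.
Local Open Scope complex_scope.
Local Open Scope classical_set_scope.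
Section S.
Variable R : realType.
Local Notation C := (R[i]).
Lemma normC_real (x : R) : `|x%:C| = (`|x|)%:C :> C.
Proof. by rewrite normc_def /= expr0n /= addr0 sqrtr_sqr. Qed.

Lemma realC_cvg (u : nat -> R) (a : R) : u @ \oo --> a ->
  (fun n => (u n)%:C : C^o) @ \oo --> (a%:C : C^o).
Proof.
move=> /cvgrPdist_lt H; apply/cvgrPdist_lt => e e0.
move: (e0); rewrite ltcE /= => /andP[/eqP Ie Re0].
near=> t.
have : `|a - u t| < complex.Re e by near: t; apply: H.
rewrite -(@rmorphB _ _ (real_complex R)) normC_real.
by move=> h; rewrite ltcE /= Ie eqxx.
Unshelve. all: by end_near.
Qed.
Lemma expi_term (t : R) k : (k`!%:R)^-1 * ('i * t%:C)^+k =
  (cos_coeff t k)%:C + 'i * (sin_coeff t k)%:C :> C.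
Proof.
rewrite /cos_coeff /sin_coeff /=.
rewrite !(rmorphM, rmorphN, rmorph1, rmorph_nat, fmorphV) /=.
rewrite exprMn.
have [m [b ->]] : exists m (b : bool), k = (b + m.*2)%N.
  by exists k./2, (odd k); rewrite odd_double_half.
case: b => /=.
- rewrite oddD odd_double /= add0n half_double !mul0r add0r mul1r.
  rewrite !rmorphXn rmorphN rmorph1 exprD expr1 -mul2n exprM sqr_i.
  ring.
- rewrite add0n odd_double /= half_double.
  rewrite !rmorphXn rmorphN rmorph1 -mul2n exprM sqr_i.
  ring.
Qed.
Lemma cos_cvg (t : R) : series (cos_coeff t) @ \oo --> cos t.
Proof. rewrite cos.unlock; exact: is_cvg_series_cos_coeff. Qed.
Lemma sin_cvg (t : R) : series (sin_coeff t) @ \oo --> sin t.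
Proof. rewrite sin.unlock; exact: is_cvg_series_sin_coeff. Qed.

Definition ex (t : R) : C := (cos t)%:C + 'i * (sin t)%:C.

Lemma expi_cvg (t : R) :
  (fun m : nat => (\sum_(k < m) (k`!%:R)^-1 * ('i * t%:C) ^+ k : C^o)) @ \oo
  --> (ex t : C^o).
Proof.
have -> : (fun m : nat => (\sum_(k < m) (k`!%:R)^-1 * ('i * t%:C) ^+ k : C^o)) =
  (fun m => ((series (cos_coeff t) m)%:C : C^o) + 'i * (series (sin_coeff t) m)%:C).
  apply/funext => m; under eq_bigr do rewrite expi_term.
  by rewrite big_split /= -mulr_sumr /series /= !big_mkord !rmorph_sum.
apply: cvgD; first exact: realC_cvg (cos_cvg t).
apply: cvgMl_tmp; exact: realC_cvg (sin_cvg t).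
Qed.
Definition vtab (a j : nat) : C :=
  match a, j with
  | 0, 0 => 1 | 3, 0 => 1 | 0, 1 => 1 | 3, 1 => -1
  | 1, 2 => 1 | 2, 2 => 1 | 1, 3 => 1 | 2, 3 => -1 | _, _ => 0 end.
Definition Vm : 'M[C]_(2*2) := \matrix_(a, j) vtab a j.
Definition Psi (f : 'I_(2*2) -> C) : 'M[C]_(2*2) :=
  \matrix_(a, b) \sum_j Vm a j * f j * Vm b j.

Lemma Psi_mul f g : Psi f *m Psi g = 2 *: Psi (fun j => f j * g j).
Proof.
apply/matrixP => a b; rewrite !mxE.
under eq_bigr do rewrite !mxE.
rewrite /Vm !big_ord_recl !big_ord0 !mxE /=.
ring.
Qed.
Definition tt (a1 a2 a3 : R) (j : 'I_(2*2)) : R :=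
  match val j with 0 => a2 - a1 - a3 | 1 => a1 - a2 - a3
  | 2 => a3 - a1 - a2 | _ => a1 + a2 + a3 end.
Definition Hm (a1 a2 a3 : R) : 'M[C]_(2*2) :=
  - 'i *: (a1%:C *: (sigma1 R *t sigma1 R) + a2%:C *: (sigma2 R *t sigma2 R)
                 + a3%:C *: (sigma3 R *t sigma3 R)).
Lemma Hm_Psi a1 a2 a3 : 2 *: Hm a1 a2 a3 = Psi (fun j => 'i * (tt a1 a2 a3 j)%:C).
Proof.
apply/matrixP => a b; rewrite /Hm /Psi /Vm !mxE !big_ord_recl !big_ord0 !mxE /=.
case: a => [[|[|[|[|a]]]] Ha]; case: b => [[|[|[|[|b]]]] Hb] //=.
all: rewrite /tt /= ?mulNr ?mulrN ?opprK -?expr2 ?sqr_i.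
all: try (rewrite ?rmorphB ?rmorphD; ring).
all: exfalso; move: Ha Hb; rewrite ?ltnS ?ltn0 //.
Qed.
Definition Phi (f : 'I_(2*2) -> C) : 'M[C]_(2*2) := 2^-1 *: Psi f.

Lemma two_neq0 : (2 : C) != 0.
Proof. by rewrite pnatr_eq0. Qed.

Lemma Phi_mul f g : Phi f *m Phi g = Phi (fun j => f j * g j).
Proof.
rewrite /Phi -scalemxAl -scalemxAr Psi_mul !scalerA; congr (_ *: _).
by field.
Qed.

Lemma Psi1 : Psi (fun=> 1) = 2%:M.
Proof.
apply/matrixP => a b; rewrite /Psi /Vm !mxE !big_ord_recl !big_ord0 !mxE /=.
case: a => [[|[|[|[|a]]]] Ha]; case: b => [[|[|[|[|b]]]] Hb] //=.
all: try (rewrite ?mulr1n ?mulr0n; ring).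
all: exfalso; move: Ha Hb; rewrite ?ltnS ?ltn0 //.
Qed.

Lemma Phi1 : Phi (fun=> 1) = 1%:M.
Proof. by rewrite /Phi Psi1 scale_scalar_mx mulVf ?two_neq0. Qed.

Lemma Hm_Phi a1 a2 a3 : Hm a1 a2 a3 = Phi (fun j => 'i * (tt a1 a2 a3 j)%:C).
Proof. by rewrite /Phi -Hm_Psi scalerA mulVf ?two_neq0 // scale1r. Qed.

Lemma Hm_pow a1 a2 a3 k :
  Hm a1 a2 a3 ^+ k = Phi (fun j => ('i * (tt a1 a2 a3 j)%:C) ^+ k).
Proof.
elim: k => [|k IH].
  rewrite expr0; have -> : (fun j => ('i * (tt a1 a2 a3 j)%:C) ^+ 0) = (fun=> 1).
    by apply/funext => j; rewrite expr0.
  by rewrite Phi1.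
by rewrite exprSr IH {1}Hm_Phi -mulmxE Phi_mul; congr Phi; apply/funext => j; rewrite exprSr.
Qed.
Lemma limC (u : nat -> C^o) (l : C^o) : u @ \oo --> l -> limn u = l.
Proof. by move=> h; apply: cvg_lim. Qed.

Lemma cvg_sumn n (f : 'I_n -> nat -> C^o) (l : 'I_n -> C^o) :
  (forall j, f j @ \oo --> l j) ->
  (fun m => \sum_(j < n) f j m) @ \oo --> \sum_(j < n) l j.
Proof.
elim: n f l => [|n IH] f l h.
  rewrite big_ord0; under eq_fun do rewrite big_ord0; exact: cvg_cst.
rewrite big_ord_recr; under eq_fun do rewrite big_ord_recr.
apply: cvgD; [apply: IH => j; exact: h | exact: h].
Qed.

Lemma Omega_Phi a1 a2 a3 : Omega a1 a2 a3 = Phi (fun j => ex (tt a1 a2 a3 j)).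
Proof.
have -> : Omega a1 a2 a3 = expm (Hm a1 a2 a3) by [].
apply/matrixP => a b; rewrite /expm mxE.
have E : forall m, (\sum_(k < m) (k`!%:R)^-1 *: Hm a1 a2 a3 ^+ k) a b =
  2^-1 * \sum_j Vm a j * (\sum_(k < m) (k`!%:R)^-1 * ('i * (tt a1 a2 a3 j)%:C) ^+ k) * Vm b j.
  move=> m; rewrite summxE.
  under eq_bigr do rewrite Hm_pow /Phi /Psi !mxE mulr_sumr mulr_sumr.
  rewrite exchange_big /= mulr_sumr; apply: eq_bigr => j _.
  rewrite mulr_sumr mulr_suml mulr_sumr; apply: eq_bigr => k _; ring.
under eq_fun do rewrite E.
apply: limC.
rewrite /Phi /Psi !mxE.
apply: cvgMl_tmp.
apply: cvg_sumn => j.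
apply: cvgMr_tmp; apply: cvgMl_tmp; exact: expi_cvg.
Qed.
Definition ptraceS {m n : nat} (M : 'M[C]_(m * n)) : 'M[C]_n :=
  \matrix_(i, j) \sum_(k < m) M (mxtens_index (k, i)) (mxtens_index (k, j)).

Lemma sum_pair m n (F : 'I_(m*n) -> C) :
  \sum_k F k = \sum_(i < m) \sum_(j < n) F (mxtens_index (i, j)).
Proof.
rewrite pair_big /= (reindex (@mxtens_index m n)) /=.
  by apply: eq_bigr => -[i j].
by exists (@mxtens_unindex m n) => x _; rewrite (mxtens_indexK, mxtens_unindexK).
Qed.

Lemma sum_delta n (k : 'I_n) (F : 'I_n -> C) :
  \sum_b ((k == b)%:R * F b) = F k.
Proof.
rewrite (bigD1 k) //= eqxx mul1r big1 ?addr0 // => b.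
by rewrite eq_sym => /negPf ->; rewrite mul0r.
Qed.

Lemma sum_delta' n (k : 'I_n) (F : 'I_n -> C) :
  \sum_b ((b == k)%:R * F b) = F k.
Proof. by under eq_bigr do rewrite eq_sym; rewrite sum_delta. Qed.

Lemma G1 m n (A : 'M[C]_m) (Z : 'M[C]_(m * n)) :
  ptraceE ((A *t (1%:M : 'M[C]_n)) *m Z) = A *m ptraceE Z.
Proof.
apply/matrixP => i j; rewrite !mxE.
under eq_bigr do rewrite mxE sum_pair.
under eq_bigr do under eq_bigr do under eq_bigr do rewrite tensmxE mxE.
rewrite exchange_big /=; apply: eq_bigr => a _.
rewrite mxE mulr_sumr; apply: eq_bigr => k _.
under eq_bigr do rewrite -mulrA.
by rewrite -mulr_sumr sum_delta.
Qed.

Lemma G2 m n (A : 'M[C]_m) (Z : 'M[C]_(m * n)) :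
  ptraceE (Z *m (A *t (1%:M : 'M[C]_n))) = ptraceE Z *m A.
Proof.
apply/matrixP => i j; rewrite !mxE.
under eq_bigr do rewrite mxE sum_pair.
under eq_bigr do under eq_bigr do under eq_bigr do rewrite tensmxE mxE.
rewrite exchange_big /=; apply: eq_bigr => a _.
rewrite mxE mulr_suml; apply: eq_bigr => k _.
rewrite (bigD1 k) //= eqxx big1 ?addr0; first by rewrite mulr1.
by move=> b /negPf ->; rewrite mulr0 mulr0.
Qed.

Lemma G3 m n (B : 'M[C]_n) (Z : 'M[C]_(m * n)) :
  ptraceE (((1%:M : 'M[C]_m) *t B) *m Z) = ptraceE (Z *m ((1%:M : 'M[C]_m) *t B)).
Proof.
apply/matrixP => i j; rewrite !mxE.
under eq_bigr do rewrite mxE sum_pair.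
under eq_bigr do under eq_bigr do under eq_bigr do rewrite tensmxE mxE.
under [RHS]eq_bigr do rewrite mxE sum_pair.
under [RHS]eq_bigr do under eq_bigr do under eq_bigr do rewrite tensmxE mxE.
under eq_bigr do under eq_bigr do under eq_bigr do rewrite -mulrA.
under eq_bigr do under eq_bigr do rewrite -mulr_sumr.
under eq_bigr do rewrite sum_delta.
under [RHS]eq_bigr do under eq_bigr do under eq_bigr do rewrite mulrCA.
under [RHS]eq_bigr do under eq_bigr do rewrite -mulr_sumr.
under [RHS]eq_bigr do rewrite sum_delta'.
rewrite exchange_big /=; apply: eq_bigr => k _; apply: eq_bigr => b _.
by rewrite mulrC.
Qed.
Lemma S1 m n (B : 'M[C]_n) (Z : 'M[C]_(m * n)) :
  ptraceS (((1%:M : 'M[C]_m) *t B) *m Z) = B *m ptraceS Z.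
Proof.
apply/matrixP => i j; rewrite !mxE.
under eq_bigr do rewrite mxE sum_pair.
under eq_bigr do under eq_bigr do under eq_bigr do rewrite tensmxE mxE.
under eq_bigr do under eq_bigr do under eq_bigr do rewrite -mulrA.
under eq_bigr do under eq_bigr do rewrite -mulr_sumr.
under eq_bigr do rewrite sum_delta.
rewrite exchange_big /=; apply: eq_bigr => b _.
by rewrite !mxE mulr_sumr.
Qed.

Lemma S2 m n (B : 'M[C]_n) (Z : 'M[C]_(m * n)) :
  ptraceS (Z *m ((1%:M : 'M[C]_m) *t B)) = ptraceS Z *m B.
Proof.
apply/matrixP => i j; rewrite !mxE.
under eq_bigr do rewrite mxE sum_pair.
under eq_bigr do under eq_bigr do under eq_bigr do rewrite tensmxE mxE.
under eq_bigr do under eq_bigr do under eq_bigr do rewrite mulrCA.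
under eq_bigr do under eq_bigr do rewrite -mulr_sumr.
under eq_bigr do rewrite sum_delta'.
rewrite exchange_big /=; apply: eq_bigr => b _.
by rewrite !mxE mulr_suml; apply: eq_bigr => k _; rewrite mulrC.
Qed.

Lemma S3 m n (A : 'M[C]_m) (Z : 'M[C]_(m * n)) :
  ptraceS ((A *t (1%:M : 'M[C]_n)) *m Z) = ptraceS (Z *m (A *t (1%:M : 'M[C]_n))).
Proof.
apply/matrixP => i j; rewrite !mxE.
under eq_bigr do rewrite mxE sum_pair.
under eq_bigr do under eq_bigr do under eq_bigr do rewrite tensmxE mxE.
under [RHS]eq_bigr do rewrite mxE sum_pair.
under [RHS]eq_bigr do under eq_bigr do under eq_bigr do rewrite tensmxE mxE.
under eq_bigr do under eq_bigr do under eq_bigr do rewrite [A _ _ * _]mulrC -mulrA.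
under eq_bigr do under eq_bigr do rewrite sum_delta.
under [RHS]eq_bigr do under eq_bigr do under eq_bigr do rewrite mulrA mulrC.
under [RHS]eq_bigr do under eq_bigr do rewrite sum_delta'.
rewrite exchange_big /=; apply: eq_bigr => k _; apply: eq_bigr => b _.
by rewrite mulrC.
Qed.

Lemma T1 m n (A : 'M[C]_m) (B : 'M[C]_n) : ptraceE (A *t B) = \tr B *: A.
Proof.
apply/matrixP => i j; rewrite !mxE /mxtrace mulr_suml; apply: eq_bigr => k _.
by rewrite tensmxE mulrC.
Qed.

Lemma T2 m n (A : 'M[C]_m) (B : 'M[C]_n) : ptraceS (A *t B) = \tr A *: B.
Proof.
apply/matrixP => i j; rewrite !mxE /mxtrace mulr_suml; apply: eq_bigr => k _.
by rewrite tensmxE.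
Qed.

Lemma trE m n (Y : 'M[C]_(m * n)) : \tr (ptraceE Y) = \tr Y.
Proof.
rewrite /mxtrace sum_pair; apply: eq_bigr => i _; by rewrite mxE.
Qed.

Lemma trS m n (Y : 'M[C]_(m * n)) : \tr (ptraceS Y) = \tr Y.
Proof.
rewrite /mxtrace sum_pair exchange_big; apply: eq_bigr => i _; by rewrite mxE.
Qed.

Lemma dag_mul m n p (A : 'M[C]_(m, n)) (B : 'M[C]_(n, p)) :
  dag (A *m B) = dag B *m dag A.
Proof. by rewrite /dag trmx_mul map_mxM. Qed.

Lemma dag_tens m n p q (A : 'M[C]_(m, n)) (B : 'M[C]_(p, q)) :
  dag (A *t B) = dag A *t dag B.
Proof. by rewrite /dag trmx_tens map_mxT. Qed.

Lemma dag_scale m n k (A : 'M[C]_(m, n)) : dag (k *: A) = k^* *: dag A.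
Proof. by apply/matrixP => i j; rewrite !mxE rmorphM. Qed.

Lemma dagK m n (A : 'M[C]_(m, n)) : dag (dag A) = A.
Proof. by apply/matrixP => i j; rewrite !mxE conjcK. Qed.

Lemma dag1 n : dag (1%:M : 'M[C]_n) = 1%:M.
Proof. by apply/matrixP => i j; rewrite !mxE eq_sym; case: (_ == _); rewrite ?conjc1 ?conjc0. Qed.

Lemma tens11 m n : (1%:M : 'M[C]_m) *t (1%:M : 'M[C]_n) = 1%:M.
Proof.
apply/matrixP => a b.
case: (mxtens_indexP a) => i k; case: (mxtens_indexP b) => j l.
rewrite tensmxE !mxE (inj_eq (can_inj (@mxtens_indexK m n))) xpair_eqE.
by case: (i == j); case: (k == l); rewrite /= ?mulr1 ?mulr0.
Qed.
Lemma LemL m n (A : 'M[C]_m) (B : 'M[C]_n) (Z : 'M[C]_(m * n)) :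
  dag B *m B = 1%:M ->
  ptraceE ((A *t B) *m Z *m dag (A *t B)) = A *m ptraceE Z *m dag A.
Proof.
move=> hB; rewrite dag_tens.
have -> : A *t B = (A *t 1%:M) *m (1%:M *t B) by rewrite tensmx_mul mulmx1 mul1mx.
have -> : dag A *t dag B = (1%:M *t dag B) *m (dag A *t 1%:M)
  by rewrite tensmx_mul mulmx1 mul1mx.
rewrite !mulmxA G2 -!mulmxA G1 G3 -!mulmxA tensmx_mul mul1mx hB tens11 mulmx1.
by rewrite mulmxA.
Qed.

Lemma LemR m n (A : 'M[C]_m) (B : 'M[C]_n) (Z : 'M[C]_(m * n)) :
  dag A *m A = 1%:M ->
  ptraceS ((A *t B) *m Z *m dag (A *t B)) = B *m ptraceS Z *m dag B.
Proof.
move=> hA; rewrite dag_tens.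
have -> : A *t B = (1%:M *t B) *m (A *t 1%:M) by rewrite tensmx_mul mulmx1 mul1mx.
have -> : dag A *t dag B = (dag A *t 1%:M) *m (1%:M *t dag B)
  by rewrite tensmx_mul mulmx1 mul1mx.
rewrite !mulmxA S2 -!mulmxA S1 S3 -!mulmxA tensmx_mul mul1mx hA tens11 mulmx1.
by rewrite mulmxA.
Qed.
Definition Pswap n : 'M[C]_(n * n) :=
  \matrix_(a, b) (((mxtens_unindex a).1 == (mxtens_unindex b).2)%:R *
                  ((mxtens_unindex a).2 == (mxtens_unindex b).1)%:R).

Lemma PswapE n (i k j l : 'I_n) :
  Pswap n (mxtens_index (i, k)) (mxtens_index (j, l)) = (i == l)%:R * (k == j)%:R.
Proof. by rewrite mxE !mxtens_indexK. Qed.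

Lemma dagP n : dag (Pswap n) = Pswap n.
Proof.
have cb (b : bool) : (b%:R : C)^* = b%:R by case: b; rewrite ?conjc1 ?conjc0.
apply/matrixP => a b; rewrite !mxE rmorphM.
rewrite !rmorph_nat.
by rewrite mulrC; congr (_ * _); rewrite eq_sym.
Qed.

Lemma ptE_swap n (Z : 'M[C]_(n * n)) : ptraceE (Pswap n *m Z *m Pswap n) = ptraceS Z.
Proof.
apply/matrixP => i j; rewrite !mxE.
under eq_bigr do rewrite mxE sum_pair.
under eq_bigr do under eq_bigr do under eq_bigr do rewrite mxE sum_pair.
under eq_bigr do under eq_bigr do under eq_bigr do under eq_bigr do under eq_bigr do rewrite !PswapE -mulrA.
under eq_bigr do under eq_bigr do under eq_bigr do under eq_bigr do rewrite sum_delta.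
under eq_bigr do under eq_bigr do under eq_bigr do rewrite sum_delta PswapE mulrA mulrC.
under eq_bigr do under eq_bigr do rewrite sum_delta'.
under eq_bigr do under eq_bigr do rewrite mulrC.
under eq_bigr do rewrite sum_delta'.
by [].
Qed.
Definition wk m n (k : 'I_m) (v : 'cV[C]_n) : 'cV[C]_(m * n) :=
  \col_a (((mxtens_unindex a).1 == k)%:R * v (mxtens_unindex a).2 0).

Arguments wk {m n}.
Lemma sum_delta2 m n (k : 'I_m) (F : 'I_m -> 'I_n -> C) :
  \sum_a \sum_b ((a == k)%:R * F a b) = \sum_b F k b.
Proof.
rewrite exchange_big /=; apply: eq_bigr => b _; exact: sum_delta'.
Qed.
Lemma dag_ptS m n (Y : 'M[C]_(m * n)) : dag (ptraceS Y) = ptraceS (dag Y).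
Proof.
apply/matrixP => i j; rewrite !mxE rmorph_sum; apply: eq_bigr => k _.
by rewrite !mxE.
Qed.

Lemma psd_ptS m n (Y : 'M[C]_(m * n)) (v : 'cV[C]_n) :
  (dag v *m ptraceS Y *m v) 0 0 = \sum_(k < m) (dag (wk k v) *m Y *m wk k v) 0 0.
Proof.
rewrite !mxE.
under eq_bigr do rewrite !mxE.
under [RHS]eq_bigr do rewrite !mxE sum_pair.
under [RHS]eq_bigr do under eq_bigr do under eq_bigr do rewrite !mxE sum_pair.
under [RHS]eq_bigr do under eq_bigr do under eq_bigr do rewrite mxtens_indexK /= mulrCA.
under [RHS]eq_bigr do rewrite sum_delta2.
under [RHS]eq_bigr do under eq_bigr do rewrite mulr_suml.
under [RHS]eq_bigr do under eq_bigr do under eq_bigr do rewrite mulr_suml.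
under [RHS]eq_bigr do under eq_bigr do under eq_bigr do under eq_bigr do
  rewrite /dag !mxE mxtens_indexK rmorphM rmorph_nat -!mulrA.
under [RHS]eq_bigr do under eq_bigr do rewrite sum_delta2.
under eq_bigr do rewrite mulr_suml.
under eq_bigr do under eq_bigr do rewrite ?mxE mulr_sumr mulr_suml.
rewrite [RHS]exchange_big /=; apply: eq_bigr => b _.
rewrite [RHS]exchange_big /=; apply: eq_bigr => j _.
apply: eq_bigr => k _; rewrite /dag ?mxE.
match goal with |- ?g => idtac g end.
ring.
Qed.
Lemma three_eq (x y z : R) : -1 <= x <= 1 -> -1 <= y <= 1 -> -1 <= z <= 1 ->
  (3 - x * (y + z) - y * z) / 4 = 0 -> x = y /\ y = z /\ x * x = 1.
Proof.
move=> /andP[x1 x2] /andP[y1 y2] /andP[z1 z2] H.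
have H' : x * y + x * z + y * z = 3.
  have h4 : (4 : R) != 0 by rewrite pnatr_eq0.
  move: H => /eqP; rewrite mulf_eq0 invr_eq0 (negPf h4) orbF subr_eq0 => /eqP.
  lra.
have hx : x * x <= 1 by nra.
have hy : y * y <= 1 by nra.
have hz : z * z <= 1 by nra.
have S : (x-y)*(x-y) + (y-z)*(y-z) + (z-x)*(z-x) <= 0 by nra.
have sq0 (u v : R) : (u - v) * (u - v) = 0 -> u = v.
  by move/eqP; rewrite mulf_eq0 orbb subr_eq0 => /eqP.
have exy : x = y by apply: sq0; nra.
have eyz : y = z by apply: sq0; nra.
split => //; split => //; subst; nra.
Qed.

Lemma sq1 (x : R) : x * x = 1 -> x = 1 \/ x = -1.
Proof.
move=> h; have : (x - 1) * (x + 1) = 0.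
  have -> : (x - 1) * (x + 1) = x * x - 1 by ring.
  by rewrite h subrr.
by move/eqP; rewrite mulf_eq0 subr_eq0 addr_eq0 => /orP[] /eqP; [left|right].
Qed.

Lemma cos4_1 (a : R) : cos (4 * a) = 1 -> sin (2 * a) = 0.
Proof.
have -> : 4 * a = 2 * a + 2 * a by ring.
rewrite cosD => h; have := cos2Dsin2 (2 * a).
move: h; set c := cos _; set s := sin _ => h1 h2.
have : s * s = 0 by nra.
by move/eqP; rewrite mulf_eq0 orbb => /eqP.
Qed.

Lemma cos4_m1 (a : R) : cos (4 * a) = -1 -> cos (2 * a) = 0.
Proof.
have -> : 4 * a = 2 * a + 2 * a by ring.
rewrite cosD => h; have := cos2Dsin2 (2 * a).
move: h; set c := cos _; set s := sin _ => h1 h2.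
have : c * c = 0 by nra.
by move/eqP; rewrite mulf_eq0 orbb => /eqP.
Qed.

Lemma sin0_cos (d : R) : sin d = 0 -> cos d = 1 \/ cos d = -1.
Proof. move=> h; apply: sq1; have := cos2Dsin2 d; rewrite h; move=> e; nra. Qed.
Definition cv (c1 c2 c3 : R) (j : 'I_(2*2)) : C :=
  match val j with 0 => 1 | 1 => c1%:C | 2 => c2%:C | _ => c3%:C end.
Definition mk2 (a b c d : C) : 'M[C]_2 :=
  \matrix_(i, j) match val i, val j with
    | 0, 0 => a | 0, _ => b | _, 0 => c | _, _ => d end.

Ltac brute :=
  apply/matrixP => -[[|[|[|[|ka]]]] Ha] [[|[|[|[|kb]]]] Hb];
  try (exfalso; repeat match goal with H : is_true (_ < _) |- _ => move: H end;
       rewrite ?ltnS ?ltn0 //; fail);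
  rewrite /Psi /Vm /cv /mk2 /Pswap ?mxE ?big_ord_recl ?big_ord0 ?mxE /=;
  ring.

Lemma case111 : Psi (cv 1 1 1) = 2 *: (mk2 1 0 0 1 *t mk2 1 0 0 1).
Proof. brute. Qed.
Lemma case1m1 : Psi (cv 1 1 (-1)) = 2 *: ((mk2 1 0 0 1 *t mk2 1 0 0 1) *m Pswap 2).
Proof. brute. Qed.
Lemma case1mm : Psi (cv 1 (-1) (-1)) = 2 *: (mk2 1 0 0 (-1) *t mk2 1 0 0 (-1)).
Proof. brute. Qed.
Lemma case1m1' : Psi (cv 1 (-1) 1) = 2 *: ((mk2 1 0 0 (-1) *t mk2 1 0 0 (-1)) *m Pswap 2).
Proof. brute. Qed.
Lemma casem11 : Psi (cv (-1) 1 1) = 2 *: ((mk2 0 1 1 0 *t mk2 0 1 1 0) *m Pswap 2).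
Proof. brute. Qed.
Lemma casemmm : Psi (cv (-1) (-1) (-1)) = 2 *: ((mk2 0 1 (-1) 0 *t mk2 0 1 (-1) 0) *m Pswap 2).
Proof. brute. Qed.
Lemma casem1m : Psi (cv (-1) 1 (-1)) = 2 *: (mk2 0 1 1 0 *t mk2 0 1 1 0).
Proof. brute. Qed.
Lemma casemm1 : Psi (cv (-1) (-1) 1) = 2 *: (mk2 0 (-1) 1 0 *t mk2 0 (-1) 1 0).
Proof. brute. Qed.

End S.

Section S2.
Variable R : realType.
Local Notation C := (R[i]).
Local Notation ex := (@ex R).
Local Notation ptraceS := (@ptraceS R _ _).
Local Notation mk2 := (@mk2 R).
Local Notation Psi := (@Psi R).
Local Notation Phi := (@Phi R).
Local Notation cv := (@cv R).
Local Notation Pswap := (@Pswap R).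
Local Notation tt := (@tt R).

Lemma ptE_scale m n k (Z : 'M[C]_(m * n)) : ptraceE (k *: Z) = k *: ptraceE Z.
Proof.
apply/matrixP => i j; rewrite !mxE mulr_sumr; apply: eq_bigr => l _; by rewrite mxE.
Qed.

Lemma ptE_phase (e : C) (M Z : 'M[C]_(2 * 2)) : e * e^* = 1 ->
  ptraceE ((e *: M) *m Z *m dag (e *: M)) = ptraceE (M *m Z *m dag M).
Proof.
move=> h; rewrite dag_scale -scalemxAl -scalemxAl -scalemxAr scalerA h scale1r //.
Qed.

Lemma ex_conj t : ex t * (ex t)^* = 1.
Proof.
rewrite /ex; apply/eqP; rewrite eq_complex /=; have := cos2Dsin2 t.
move=> h; apply/andP; split; apply/eqP; nra.
Qed.

Lemma ex_shift t d : sin d = 0 -> ex (t + d) = ex t * (cos d)%:C.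
Proof.
move=> h; rewrite /ex cosD sinD h; apply/eqP; rewrite eq_complex /=.
by apply/andP; split; apply/eqP; ring.
Qed.
Lemma dag_mk2 a b c d : dag (mk2 a b c d) = mk2 a^* c^* b^* d^*.
Proof.
apply/matrixP => -[[|[|ka]] Ha] [[|[|kb]] Hb];
  try (exfalso; repeat match goal with H : is_true (_ < _) |- _ => move: H end;
       rewrite ?ltnS ?ltn0 //; fail);
  by rewrite !mxE.
Qed.

Ltac brute2 :=
  rewrite dag_mk2 ?conjc0 ?conjc1 ?rmorphN ?rmorph1;
  apply/matrixP => -[[|[|ka]] Ha] [[|[|kb]] Hb];
  try (exfalso; repeat match goal with H : is_true (_ < _) |- _ => move: H end;
       rewrite ?ltnS ?ltn0 //; fail);
  rewrite /mk2 ?mxE ?big_ord_recl ?big_ord0 ?mxE /=;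
  ring.

Lemma uI : dag (mk2 1 0 0 1) *m mk2 1 0 0 1 = 1%:M.
Proof. brute2. Qed.
Lemma uZ : dag (mk2 1 0 0 (-1)) *m mk2 1 0 0 (-1) = 1%:M.
Proof. brute2. Qed.
Lemma uX : dag (mk2 0 1 1 0) *m mk2 0 1 1 0 = 1%:M.
Proof. brute2. Qed.
Lemma uDX : dag (mk2 0 1 (-1) 0) *m mk2 0 1 (-1) 0 = 1%:M.
Proof. brute2. Qed.
Lemma uXD : dag (mk2 0 (-1) 1 0) *m mk2 0 (-1) 1 0 = 1%:M.
Proof. brute2. Qed.
Lemma Phi_of_Psi f (X : 'M[C]_(2*2)) : Psi f = 2 *: X -> Phi f = X.
Proof. by move=> h; rewrite /Phi h scalerA mulVf ?two_neq0 // scale1r. Qed.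

Definition good (M : 'M[C]_(2*2)) :=
  exists A : 'M[C]_2, dag A *m A = 1%:M /\ (M = A *t A \/ M = (A *t A) *m Pswap 2).

Lemma cases_all (c1 c2 c3 : R) : (c1 = 1 \/ c1 = -1) -> (c2 = 1 \/ c2 = -1) ->
  (c3 = 1 \/ c3 = -1) -> good (Phi (cv c1 c2 c3)).
Proof.
case=> ->; case=> ->; case=> ->.
- exists (mk2 1 0 0 1); split; [exact: uI | left; apply: Phi_of_Psi; exact: case111].
- exists (mk2 1 0 0 1); split; [exact: uI | right; apply: Phi_of_Psi; exact: case1m1].
- exists (mk2 1 0 0 (-1)); split; [exact: uZ | right; apply: Phi_of_Psi; exact: case1m1'].
- exists (mk2 1 0 0 (-1)); split; [exact: uZ | left; apply: Phi_of_Psi; exact: case1mm].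
- exists (mk2 0 1 1 0); split; [exact: uX | right; apply: Phi_of_Psi; exact: casem11].
- exists (mk2 0 1 1 0); split; [exact: uX | left; apply: Phi_of_Psi; exact: casem1m].
- exists (mk2 0 (-1) 1 0); split; [exact: uXD | left; apply: Phi_of_Psi; exact: casemm1].
- exists (mk2 0 1 (-1) 0); split; [exact: uDX | right; apply: Phi_of_Psi; exact: casemmm].
Qed.

Lemma Phi_scale (e : C) f : Phi (fun j => e * f j) = e *: Phi f.
Proof.
apply/matrixP => a b; rewrite /Phi /Psi !mxE mulr_sumr mulr_sumr mulr_sumr.
by apply: eq_bigr => j _; ring.
Qed.

Lemma Omega_good (a1 a2 a3 : R) :
  (3 - cos (4 * a1) * (cos (4 * a2) + cos (4 * a3))
     - cos (4 * a2) * cos (4 * a3)) / 4 = 0 ->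
  exists (e : C) (M : 'M[C]_(2*2)), e * e^* = 1 /\ good M /\ Omega a1 a2 a3 = e *: M.
Proof.
move=> H.
have b (t : R) : -1 <= cos t <= 1 by rewrite cos_geN1 cos_le1.
have [x12 [x23 xx]] := @three_eq R _ _ _ (b _) (b _) (b _) H.
have hs : sin (2 * a1 - 2 * a2) = 0 /\ sin (2 * a3 - 2 * a2) = 0 /\ sin (2 * a1 + 2 * a3) = 0.
  rewrite !sinB sinD; case: (@sq1 R _ xx) => hx.
  - have s1 := @cos4_1 R _ hx.
    have s2 := @cos4_1 R _ (etrans (esym x12) hx).
    have s3 := @cos4_1 R _ (etrans (esym x23) (etrans (esym x12) hx)).
    by rewrite s1 s2 s3 !mulr0 !mul0r subrr addr0.
  - have s1 := @cos4_m1 R _ hx.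
    have s2 := @cos4_m1 R _ (etrans (esym x12) hx).
    have s3 := @cos4_m1 R _ (etrans (esym x23) (etrans (esym x12) hx)).
    by rewrite s1 s2 s3 !mulr0 !mul0r subrr addr0.
case: hs => h1 [h2 h3].
exists (ex (tt a1 a2 a3 ord0)),
  (Phi (cv (cos (2 * a1 - 2 * a2)) (cos (2 * a3 - 2 * a2)) (cos (2 * a1 + 2 * a3)))).
split; first exact: ex_conj.
split; first by apply: cases_all; apply: sin0_cos.
rewrite Omega_Phi -Phi_scale; congr Phi; apply/funext => -[[|[|[|k]]] Hk].
- by rewrite /cv /= mulr1.
- rewrite /cv /= -ex_shift //; congr ex; rewrite /tt /=; ring.
- rewrite /cv /= -ex_shift //; congr ex; rewrite /tt /=; ring.
- rewrite /cv /= -ex_shift //; congr ex; rewrite /tt /=; ring.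
Qed.
Lemma core (e : C) (M : 'M[C]_(2*2)) (Y : 'M[C]_(2*2)) :
  e * e^* = 1 -> good M -> \tr Y = 1 ->
  ptraceE ((e *: M) *m Y *m dag (e *: M)) =
  ptraceE ((e *: M) *m (ptraceE Y *t ptraceS Y) *m dag (e *: M)).
Proof.
move=> he [A [hA [->|->]]] hY; rewrite !ptE_phase //.
  by rewrite !LemL // T1 trS hY scale1r.
have sw Z : ptraceE ((A *t A) *m Pswap 2 *m Z *m dag ((A *t A) *m Pswap 2)) =
    A *m ptraceS Z *m dag A.
  rewrite dag_mul dagP.
  have -> : (A *t A) *m Pswap 2 *m Z *m (Pswap 2 *m dag (A *t A)) =
            (A *t A) *m (Pswap 2 *m Z *m Pswap 2) *m dag (A *t A) by rewrite !mulmxA.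
  by rewrite LemL // ptE_swap.
by rewrite !sw T2 trE hY scale1r.
Qed.

Lemma unit_dag n (L : 'M[C]_n) : unitary L -> dag L *m L = 1%:M.
Proof. by move=> h; apply: mulmx1C. Qed.
End S2.

Local Close Scope classical_set_scope.

Theorem theorem3 (R : realType) (L1 L2 R1 R2 : 'M[R[i]]_2) (a1 a2 a3 : R) :
  unitary L1 -> unitary L2 -> unitary R1 -> unitary R2 ->
  (3 - cos (4 * a1) * (cos (4 * a2) + cos (4 * a3))
     - cos (4 * a2) * cos (4 * a3)) / 4 = 0 ->
  let U : 'M[R[i]]_(2 * 2) := (L1 *t L2) *m Omega a1 a2 a3 *m (R1 *t R2) in
  forall rho : 'M[R[i]]_(2 * 2), density rho ->
  exists zeta : 'M[R[i]]_2, density zeta /\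
    ptraceE (U *m rho *m dag U) =
    ptraceE (U *m (ptraceE rho *t zeta) *m dag U).
Proof.
move=> uL1 uL2 uR1 uR2 H U rho [rh rp rt].
have [e [M [he [gM hO]]]] := @Omega_good R _ _ _ H.
exists (@ptraceS R 2 2 rho); split.
  split.
  - by rewrite dag_ptS rh.
  - by move=> v; rewrite psd_ptS; apply: sumr_ge0 => k _; exact: rp.
  - by rewrite trS.
have hL2 := @unit_dag R _ _ uL2; have hR1 := @unit_dag R _ _ uR1; have hR2 := @unit_dag R _ _ uR2.
set K := R1 *t R2.
have E Z : ptraceE (U *m Z *m dag U) =
    L1 *m ptraceE (Omega a1 a2 a3 *m (K *m Z *m dag K) *m dag (Omega a1 a2 a3)) *m dag L1.
  rewrite -(@LemL R _ _ L1 L2 _ hL2) /U /K !dag_mul; congr ptraceE; rewrite !mulmxA.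
  done.
rewrite !E; congr (L1 *m _ *m dag L1).
set Y := K *m rho *m dag K.
have trY : \tr Y = 1.
  rewrite /Y mxtrace_mulC mulmxA /K dag_tens tensmx_mul hR1 hR2 tens11 mul1mx //.
have -> : K *m (ptraceE rho *t @ptraceS R 2 2 rho) *m dag K = ptraceE Y *t @ptraceS R 2 2 Y.
  by rewrite /Y /K LemL // LemR // dag_tens !tensmx_mul.
by rewrite hO; apply: core.
Qed.
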